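(* Let $F$ be an algebraically closed field (of arbitrary characteristic) and let $V\subseteq M_2(F)$ be a Mathieu subspace with $\dim_FV=2$. Then either $V\subseteq I_2^\perp=\{b\in M_2(F):\mathrm{Tr}(b)=0\}$, or there exist nonzero idempotents $e_1,e_2\in M_2(F)$ with $e_1+e_2=I_2$ and distinct nonzero $\lambda_1,\lambda_2\in F$ with $\lambda_1+\lambda_2\ne0$ such that $V=F(\lambda_1e_1+\lambda_2e_2)+e_1M_2(F)e_2$. Equivalently, either $V\subseteq I_2^\perp$ or $V$ is conjugate to $\left\{\begin{pmatrix}\lambda_1s&t\\0&\lambda_2s\end{pmatrix}: s,t\in F\right\}$ for some distinct nonzero $\lambda_1,\lambda_2\in F$ with $\lambda_1+\lambda_2\ne0$.
   Context: Let $\mathcal A$ be an associative algebra over a field $F$. An $F$-subspace $M\subseteq\mathcal A$ is a Mathieu subspace (MS) of $\mathcal A$ if for all $a,b,c\in\mathcal A$ such that $a^m\in M$ for all $m\ge 1$, there exists $N$ (depending on $a,b,c$) such that $ba^mc\in M$ for all $m\ge N$. *)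

(* Defs.v *)
From HB Require Import structures.
From mathcomp Require Import all_boot all_order all_algebra.
Set Implicit Arguments. Unset Strict Implicit. Unset Printing Implicit Defensive.
Import GRing.Theory.
Local Open Scope ring_scope.

(* Mathieu subspace condition for a subset M of a ring A (the F-subspace
   property is supplied separately, e.g. by taking M to be a {vspace _}). *)
Definition mathieu {A : pzRingType} (M : {pred A}) : Prop :=
  forall a b c : A,
    (forall m : nat, (0 < m)%N -> a ^+ m \in M) ->
    exists N : nat, forall m : nat, (N <= m)%N -> b * a ^+ m * c \in M.

(* Main.v *)
Require Import Defs.
From Stdlib Require Import Classical.
From HB Require Import structures.
From mathcomp Require Import all_boot all_order all_algebra.
From mathcomp Require Import ring.
Import GRing.Theory.
Local Open Scope ring_scope.
Set Implicit Arguments.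

Section M2.
Context {F : fieldType}.
Definition i0 : 'I_2 := @Ordinal 2 0 isT.
Definition i1 : 'I_2 := @Ordinal 2 1 isT.
Definition mk (a b c d : F) : 'M[F]_2 :=
  \matrix_(i, j) if (i : nat) == 0%N then (if (j : nat) == 0%N then a else b)
                 else (if (j : nat) == 0%N then c else d).

Lemma ord2P (i : 'I_2) : i = i0 \/ i = i1.
Proof. case: i => [[|[|//]]] Hi; [left|right]; exact: val_inj. Qed.

Lemma sum2 (f : 'I_2 -> F) : \sum_(i < 2) f i = f i0 + f i1.
Proof. rewrite !big_ord_recl big_ord0 addr0; congr (f _ + f _); exact: val_inj. Qed.

Lemma mkE (M : 'M[F]_2) : M = mk (M i0 i0) (M i0 i1) (M i1 i0) (M i1 i1).
Proof. apply/matrixP=> i j; rewrite mxE; by case: (ord2P i) => ->; case: (ord2P j) => ->. Qed.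

Lemma mk_entries a b c d : [/\ mk a b c d i0 i0 = a, mk a b c d i0 i1 = b, mk a b c d i1 i0 = c & mk a b c d i1 i1 = d].
Proof. by rewrite !mxE. Qed.

Lemma mkP a b c d a' b' c' d' : mk a b c d = mk a' b' c' d' <-> [/\ a = a', b = b', c = c' & d = d'].
Proof. split=> [H|[-> -> -> ->]] //.
have f := fun i j => congr1 (fun M : 'M[F]_2 => M i j) H.
by have:= f i0 i0; have:= f i0 i1; have:= f i1 i0; have:= f i1 i1; rewrite !mxE /= => -> -> -> ->. Qed.

Lemma mulmk a b c d a' b' c' d' : mk a b c d * mk a' b' c' d' =
  mk (a*a'+b*c') (a*b'+b*d') (c*a'+d*c') (c*b'+d*d').
Proof. apply/matrixP=> i j; rewrite -mulmxE !mxE sum2 !mxE.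
by case: (ord2P i) => ->; case: (ord2P j) => ->. Qed.

Lemma addmk a b c d a' b' c' d' : mk a b c d + mk a' b' c' d' = mk (a+a') (b+b') (c+c') (d+d').
Proof. apply/matrixP=> i j; rewrite !mxE.
by case: (ord2P i) => ->; case: (ord2P j) => ->. Qed.

Lemma scalemk k a b c d : k *: mk a b c d = mk (k*a) (k*b) (k*c) (k*d).
Proof. apply/matrixP=> i j; rewrite !mxE.
by case: (ord2P i) => ->; case: (ord2P j) => ->. Qed.

Lemma oppmk a b c d : - mk a b c d = mk (-a) (-b) (-c) (-d).
Proof. apply/matrixP=> i j; rewrite !mxE.
by case: (ord2P i) => ->; case: (ord2P j) => ->. Qed.

Lemma onemk : (1 : 'M[F]_2) = mk 1 0 0 1.
Proof. apply/matrixP=> i j; rewrite !mxE.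
by case: (ord2P i) => ->; case: (ord2P j) => ->. Qed.

Lemma zeromk : (0 : 'M[F]_2) = mk 0 0 0 0.
Proof. apply/matrixP=> i j; rewrite !mxE.
by case: (ord2P i) => ->; case: (ord2P j) => ->. Qed.

Lemma trmk a b c d : \tr (mk a b c d) = a + d.
Proof. by rewrite /mxtrace sum2 !mxE. Qed.

Definition det2 (M : 'M[F]_2) := M i0 i0 * M i1 i1 - M i0 i1 * M i1 i0.

Lemma det2mk a b c d : det2 (mk a b c d) = a * d - b * c.
Proof. by rewrite /det2 !mxE. Qed.

Ltac mkify := rewrite ?(onemk, zeromk, mulmk, addmk, scalemk, oppmk, det2mk, trmk).

Lemma CH (M : 'M[F]_2) : M * M = \tr M *: M - det2 M *: 1.
Proof. rewrite [M]mkE; set a := M i0 i0; set b := M i0 i1; set c := M i1 i0; set d := M i1 i1.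
mkify. by apply/mkP; split; ring. Qed.

Lemma det2M (A B : 'M[F]_2) : det2 (A * B) = det2 A * det2 B.
Proof. rewrite [A]mkE [B]mkE; mkify; ring. Qed.

Lemma trC (A B : 'M[F]_2) : \tr (A * B) = \tr (B * A).
Proof. rewrite [A]mkE [B]mkE; mkify; ring. Qed.

Lemma trD (A B : 'M[F]_2) : \tr (A + B) = \tr A + \tr B.
Proof. rewrite [A]mkE [B]mkE; mkify; ring. Qed.

Lemma trZ k (A : 'M[F]_2) : \tr (k *: A) = k * \tr A.
Proof. rewrite [A]mkE; mkify; ring. Qed.

Lemma ideal1 (e : 'M[F]_2) i j :
  delta_mx i0 i * e * delta_mx j i0 + delta_mx i1 i * e * delta_mx j i1 = e i j *: 1.
Proof.
apply/matrixP=> r s; rewrite -!mulmxE !mxE !sum2 !mxE !sum2 !mxE.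
by case: (ord2P i) => ->; case: (ord2P j) => ->; case: (ord2P r) => ->; case: (ord2P s) => -> /=;
  rewrite ?(mulr0, mul0r, mulr1, mul1r, addr0, add0r).
Qed.
End M2.

Ltac mkify := rewrite ?(onemk, zeromk, mulmk, addmk, scalemk, oppmk, det2mk, trmk).
Lemma noidem (F : fieldType) (V : {vspace 'M[F]_2}) :
  mathieu (V : {pred 'M[F]_2}) -> \dim V = 2%N ->
  forall e, e \in V -> e * e = e -> e != 0 -> False.
Proof.
move=> HM Hd e eV ee e0.
have Ep m : e ^+ m.+1 = e.
  by elim: m => [|m IH]; rewrite ?expr1 // exprS IH ee.
have He b c : b * e * c \in V.
  have [|N HN] := HM e b c.
    by case=> [//|m] _; rewrite Ep.
  by have := HN N.+1 (leqnSn N); rewrite Ep.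
have [i [j eij]] : exists i j, e i j != 0.
  apply: NNPP => H; move/negP: e0; apply; apply/eqP/matrixP => i j.
  rewrite mxE; apply/eqP; apply: contraT => Hn; case: H; by exists i, j.
have full b : b \in V.
  have -> : b = (e i j)^-1 *: (b * (e i j *: 1)).
    by rewrite -scalerAr mulr1 scalerA mulVf // scale1r.
  apply: memvZ; rewrite -ideal1 mulrDr !mulrA; apply: memvD; exact: He.
have : (fullv <= V)%VS by apply/subvP => b _; exact: full.
move/dimvS; rewrite Hd dimvf /dimv /= dim_matrix.
by [].
Qed.


Lemma detnz (F : fieldType) (V : {vspace 'M[F]_2}) :
  mathieu (V : {pred 'M[F]_2}) -> \dim V = 2%N ->
  forall x, x \in V -> det2 x = 0 -> \tr x = 0.
Proof.
move=> HM Hd x xV dx; case: (eqVneq (\tr x) 0) => // t0; exfalso.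
apply: (noidem HM Hd (e := (\tr x)^-1 *: x)).
- exact: memvZ.
- rewrite -scalerAl -scalerAr (CH x) dx scale0r subr0 !scalerA; congr (_ *: x).
  by field.
- rewrite scaler_eq0 invr_eq0 negb_or t0 /=; apply: contra t0 => /eqP ->.
  by rewrite mxtrace0.
Qed.


Lemma one_notin (F : fieldType) (V : {vspace 'M[F]_2}) :
  mathieu (V : {pred 'M[F]_2}) -> \dim V = 2%N -> (1 : 'M[F]_2) \notin V.
Proof.
move=> HM Hd; apply/negP => H; apply: (noidem HM Hd H); first by rewrite mulr1.
exact: oner_neq0.
Qed.

Lemma conjE (F : fieldType) (n : 'M[F]_2) : \tr n = 0 -> det2 n = 0 -> n != 0 ->
  exists P Q, [/\ P * Q = 1, Q * P = 1 & n = P * mk 0 1 0 0 * Q].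
Proof.
rewrite [n]mkE; set a := n i0 i0; set b := n i0 i1; set c := n i1 i0; set d := n i1 i1.
rewrite trmk det2mk => tr0 dt0 nz.
have da : d = - a by apply/eqP; rewrite -addr_eq0 addrC tr0.
rewrite da in dt0 nz *.
case: (eqVneq c 0) => c0.
- have a0 : a = 0.
    by move/eqP: dt0; rewrite c0 mulr0 subr0 mulrN oppr_eq0 mulf_eq0 orbb => /eqP.
  have b0 : b != 0 by apply: contra nz => /eqP b0; rewrite a0 b0 c0 oppr0 zeromk.
  exists (mk b 0 0 1), (mk b^-1 0 0 1); mkify; split; apply/mkP; split;
    rewrite ?a0 ?c0; try field; by [].
- exists (mk a 1 c 0), (mk 0 c^-1 1 (- a / c)); mkify; split; apply/mkP; split;
    try field; try by [].
  have hb : b * c = - (a * a) by move/eqP: dt0; rewrite subr_eq0 mulrN eq_sym => /eqP.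
  have -> : b = - (a * a) / c by rewrite -hb mulfK.
  field; by [].
Qed.

Unset Implicit Arguments.

Theorem corollary3p2 (F : closedFieldType) (V : {vspace 'M[F]_2}) :
  mathieu (V : {pred 'M[F]_2}) -> \dim V = 2%N ->
  (forall b : 'M[F]_2, b \in V -> \tr b = 0)
  \/
  (exists (e1 e2 : 'M[F]_2) (l1 l2 : F),
      [/\ e1 != 0, e2 != 0, e1 * e1 = e1, e2 * e2 = e2 & e1 + e2 = 1]
      /\ [/\ l1 != 0, l2 != 0, l1 != l2 & l1 + l2 != 0]
      /\ (forall x : 'M[F]_2,
            x \in V <->
            exists (s : F) (y : 'M[F]_2),
              x = s *: (l1 *: e1 + l2 *: e2) + e1 * y * e2)).
Proof.
move=> HM Hd.
case: (classic (forall b : 'M[F]_2, b \in V -> \tr b = 0)) => [H|H]; [by left|right].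
have [y [yV ty]] : exists y, y \in V /\ \tr y != 0.
  apply: NNPP => H2; apply: H => b bV; apply: NNPP => H3; apply: H2; exists b; split=>//; exact/eqP.
have dy : det2 y != 0.
  by apply: contra ty => /eqP d0; apply/eqP; have := detnz HM Hd yV d0.
have [z [zV zy]] : exists z, z \in V /\ z \notin <[y]>%VS.
  apply: NNPP => H2.
  have : (V <= <[y]>)%VS.
    apply/subvP => w wV; apply: contraT => wn; case: H2; by exists w.
  by move/dimvS; rewrite Hd dim_vline; case: (y != 0).
pose D := det2 y.
pose B := y i0 i0 * z i1 i1 + y i1 i1 * z i0 i0 - y i0 i1 * z i1 i0 - y i1 i0 * z i0 i1.
have [s Hs] := @solve_monicpoly F 2 (fun i => if i == 0%N then - det2 z / D else - B / D) isT.
have Hs' : s ^+ 2 = - det2 z / D + - B / D * s.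
  by rewrite Hs sum2 /= expr0 expr1 mulr1.
pose n := s *: y + z.
have nV : n \in V by apply: memvD; [apply: memvZ|].
have dn : det2 n = 0.
  have E : det2 n = D * s ^+ 2 + B * s + det2 z by rewrite /n /D /B /det2 !mxE; ring.
  by rewrite E Hs'; field.
have n0 : n != 0.
  apply: contra zy => /eqP n0.
  have -> : z = - (s *: y) by apply/eqP; rewrite -addr_eq0 addrC; exact/eqP.
  by rewrite -scaleNr; apply: memvZ; exact: memv_line.
have tn : \tr n = 0 by have := detnz HM Hd nV dn.
have [P [Q [PQ QP nPQ]]] := conjE tn dn n0.
have cj A C : (P * A * Q) * (P * C * Q) = P * (A * C) * Q.
  by rewrite !mulrA -(mulrA (P * A) Q P) QP mulr1.
have cZ k A : k *: (P * A * Q) = P * (k *: A) * Q by rewrite scalerAl scalerAr.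
have cD A C : P * A * Q + P * C * Q = P * (A + C) * Q by rewrite mulrDr mulrDl.
have cN A : - (P * A * Q) = P * (- A) * Q by rewrite mulrN mulNr.
have cK A : A = P * (Q * A * P) * Q.
  by rewrite !mulrA PQ mul1r -mulrA PQ mulr1.
have cK' A : Q * (P * A * Q) * P = A.
  by rewrite !mulrA QP mul1r -mulrA QP mulr1.
have det2PQ : det2 P * det2 Q = 1 by rewrite -det2M PQ onemk det2mk mulr1 mulr0 subr0.
have dconj A : det2 (P * A * Q) = det2 A by rewrite !det2M mulrAC det2PQ mul1r.
have tconj A : \tr (P * A * Q) = \tr A by rewrite trC mulrA QP mul1r.
set y' := Q * y * P.
have yc : y = P * y' * Q := cK y.
have y'E := mkE y'.
set a := y' i0 i0 in y'E; set b := y' i0 i1 in y'E; set c := y' i1 i0 in y'E; set d := y' i1 i1 in y'E.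
rewrite y'E in yc.
clearbody y'.
have c0 : c = 0.
  apply: NNPP => /eqP c0.
  pose t := a * d / c - b.
  have tV : y + t *: n \in V by apply: memvD => //; apply: memvZ.
  have : det2 (y + t *: n) = 0.
    by rewrite yc nPQ cZ cD dconj; mkify; rewrite /t; field.
  move/(detnz HM Hd tV); rewrite trD trZ tn mulr0 addr0; exact/eqP.
rewrite c0 in yc.
have dya : det2 y = a * d by rewrite yc dconj det2mk mulr0 subr0.
have a0 : a != 0 by apply: contra dy => /eqP a0; rewrite /D dya a0 mul0r.
have d0 : d != 0 by apply: contra dy => /eqP d0; rewrite /D dya d0 mulr0.
have tya : \tr y = a + d by rewrite yc tconj trmk.
have ad : a != d.
  apply/eqP => ad.
  have hu : y - b *: n = P * (a *: 1) * Q.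
    rewrite yc nPQ cZ cN cD; congr (P * _ * Q); mkify; apply/mkP; split; rewrite ?ad; ring.
  rewrite -scalerAr -scalerAl mulr1 PQ in hu.
  have : (1 : 'M[F]_2) \in V.
    have -> : (1 : 'M[F]_2) = a^-1 *: (y - b *: n) by rewrite hu scalerA mulVf // scale1r.
    by apply: memvZ; apply: memvB => //; apply: memvZ.
  by move: (one_notin HM Hd) => /negP.
exists (P * mk 1 0 0 0 * Q), (P * mk 0 0 0 1 * Q), a, d.
split; [split|split; [split|]].
- apply/eqP => h; have := cK' (mk 1 0 0 0); rewrite h mulr0 mul0r zeromk.
  by move/mkP => [/eqP]; rewrite eq_sym oner_eq0.
- apply/eqP => h; have := cK' (mk 0 0 0 1); rewrite h mulr0 mul0r zeromk.
  by move/mkP => [_ _ _ /eqP]; rewrite eq_sym oner_eq0.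
- by rewrite cj; congr (P * _ * Q); mkify; apply/mkP; split; ring.
- by rewrite cj; congr (P * _ * Q); mkify; apply/mkP; split; ring.
- rewrite cD addmk; have -> : mk (1 + 0) (0 + 0) (0 + 0) (0 + 1) = 1 :> 'M[F]_2.
    by rewrite onemk; apply/mkP; split; ring.
  by rewrite mulr1 PQ.
- by [].
- by [].
- by [].
- by rewrite -tya.
have Vspan : V = (<[n]> + <[y]>)%VS.
  apply/eqP; rewrite eq_sym eqEdim; apply/andP; split.
    apply/subvP => w /memv_addP [u /vlineP [k ->] [v /vlineP [m ->] ->]].
    by apply: memvD; apply: memvZ.
  have fr : free [:: n; y].
    rewrite free_cons seq1_free span_seq1; apply/andP; split.
      apply/vlineP => [[k hk]]; move/eqP: n0; apply.
      have : \tr n = k * \tr y by rewrite hk trZ.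
      rewrite tn => /esym/eqP; rewrite mulf_eq0 (negbTE ty) orbF => /eqP k0.
      by rewrite hk k0 scale0r.
    by apply: contra ty => /eqP ->; rewrite mxtrace0.
  by move: fr; rewrite /free span_cons span_seq1 Hd => /eqP ->.
move=> x; rewrite Vspan; split.
- move/memv_addP => [u /vlineP [k ->] [v /vlineP [m ->] ->]].
  exists m, ((k + m * b) *: (P * mk 0 1 0 0 * Q)).
  rewrite nPQ yc !(cZ, cD, cj); congr (P * _ * Q).
  by mkify; apply/mkP; split; ring.
- move=> [s0 [Y ->]].
  have YE := cK Y; set W := Q * Y * P in YE; rewrite (mkE W) in YE; clearbody W.
  apply/memv_addP; exists ((W i0 i1 - s0 * b) *: n); first by apply: memvZ; exact: memv_line.
  exists (s0 *: y); first by apply: memvZ; exact: memv_line.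
  rewrite YE nPQ yc !(cZ, cD, cj); congr (P * _ * Q).
  by mkify; apply/mkP; split; ring.
Qed.
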